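(* In the setting of the context, assume $\frac{\ln 2}{\phi}-d^2\ge0$ and let $\nu=\sqrt{\frac{\ln 2}{\phi}-d^2}$, with $\nu\le D_{\rm L}$. Then $$\mathbb{P}(\Delta_{\rm sum}\ge0)\ge\begin{cases}1-\dfrac{2\nu^2}{D_{\rm L}^2}, & \nu\le\dfrac{D_{\rm L}}{2},\\[2mm] 2\left(1-\dfrac{\nu}{D_{\rm L}}\right)^2, & \dfrac{D_{\rm L}}{2}<\nu\le D_{\rm L}.\end{cases}$$
   Context: Fix constants $D_{\rm L},d,\phi,\rho,\eta>0$. Two users are located at $(x_1,0,0)$ and $(x_2,0,0)$ with $x_1,x_2$ independent, $x_1$ uniform on $[-D_{\rm L}/2,0]$, $x_2$ uniform on $[0,D_{\rm L}/2]$. Let $z=x_2-x_1$, $P=e^{-\phi(z^2+d^2)}$ (probability that an interference LoS link is present) and $S=\rho\eta/d^2$. Each user's (EDMA) rate is $$R=P\log_2\!\left(1+\frac{S}{\frac{\rho\eta}{z^2+d^2}+1}\right)+(1-P)\log_2(1+S),$$ the EDMA sum rate is $R^{\rm EDMA}=2R$, the TDMA sum rate is $R^{\rm TDMA}=\log_2(1+S)$, and $\Delta_{\rm sum}=R^{\rm EDMA}-R^{\rm TDMA}$ (a random variable through $x_1,x_2$). *)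

(* Defs.v *)
From HB Require Import structures.
From mathcomp Require Import all_boot all_order all_algebra.
From mathcomp Require Import all_classical all_reals all_analysis.
Set Implicit Arguments. Unset Strict Implicit. Unset Printing Implicit Defensive.
Import Order.TTheory GRing.Theory Num.Theory.
Local Open Scope ring_scope.

Section defs.
Context {R : realType}.

Definition log2 (x : R) : R := ln x / ln 2.

Definition los_prob (phi d x1 x2 : R) : R :=
  expR (- (phi * ((x2 - x1) ^+ 2 + d ^+ 2))).

Definition edma_rate (rho eta phi d x1 x2 : R) : R :=
  let P := los_prob phi d x1 x2 in
  let S := rho * eta / d ^+ 2 in
  P * log2 (1 + S / (rho * eta / ((x2 - x1) ^+ 2 + d ^+ 2) + 1))
  + (1 - P) * log2 (1 + S).

Definition R_EDMA (rho eta phi d x1 x2 : R) : R := 2 * edma_rate rho eta phi d x1 x2.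
Definition R_TDMA (rho eta d : R) : R := log2 (1 + rho * eta / d ^+ 2).
Definition Delta_sum (rho eta phi d x1 x2 : R) : R :=
  R_EDMA rho eta phi d x1 x2 - R_TDMA rho eta d.

Lemma left_lt (DL : R) : 0 < DL -> - (DL / 2) < 0.
Proof. by move=> h; rewrite oppr_lt0 divr_gt0. Qed.
Lemma right_lt (DL : R) : 0 < DL -> 0 < DL / 2.
Proof. by move=> h; rewrite divr_gt0. Qed.

Definition users_law (DL : R) (hDL : 0 < DL) : set (R * R) -> \bar R :=
  (uniform_prob (left_lt hDL) \x uniform_prob (right_lt hDL))%E.

End defs.

(* Main.v *)
Require Import Defs.
From HB Require Import structures.
From mathcomp Require Import all_boot all_order all_algebra.
From mathcomp Require Import all_classical all_reals all_analysis.
From mathcomp Require Import ring lra measurable_realfun.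
Import Order.TTheory GRing.Theory Num.Theory.
Local Open Scope ring_scope.
Local Open Scope classical_set_scope.
Import HBNNSimple.
Lemma ftc_lin (R : realType) (p h a b : R) : a < b ->
  (\int[@lebesgue_measure R]_(x in `[a, b]) ((p - x) / h)%:E =
   ((p * b - b ^+ 2 / 2) / h - (p * a - a ^+ 2 / 2) / h)%:E)%E.
Proof.
move=> ab.
pose F := fun x : R => (p * x - x ^+ 2 / 2) / h.
have dF : forall x, is_derive x (1:R) F ((p - x) / h).
  move=> x; rewrite /F.
  apply: is_derive_eq.
  rewrite !(scaler0, add0r, mulr0, addr0) /GRing.scale /= mulr1.
  have h2 : (2:R) != 0 by rewrite pnatr_eq0.
  rewrite mulrC; congr (_ * _); by field.

have cF : forall x : R, {for x, continuous (F : R^o -> R^o)}.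
  move=> t; apply/differentiable_continuous; rewrite -derivable1_diffP.
  by case: (dF t).
have cf : forall x : R, {for x, continuous ((fun y => (p - y) / h) : R^o -> R^o)}.
  move=> t; apply/differentiable_continuous; rewrite -derivable1_diffP.
  exact: ex_derive.
rewrite (@continuous_FTC2 _ _ F)//.
- apply: (@continuous_subspaceT R^o R^o) => x; exact: cf.
- split.
  + by move=> x _; case: (dF x).
  + exact: cvg_at_right_filter (cF a).
  + exact: cvg_at_left_filter (cF b).
- by move=> x _; rewrite derive1E derive_val.
Qed.
Lemma ftc_lin' (R : realType) (p h a b : R) : a <= b ->
  (\int[@lebesgue_measure R]_(x in `[a, b]) ((p - x) / h)%:E =
   ((p * b - b ^+ 2 / 2) / h - (p * a - a ^+ 2 / 2) / h)%:E)%E.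
Proof.
rewrite le_eqVlt => /predU1P[<-|ab]; last exact: ftc_lin.
by rewrite set_itv1 integral_set1 subrr.
Qed.

Lemma leb_itv (R : realType) (a b : R) : a <= b ->
  lebesgue_measure (`[a, b] : set R) = (b - a)%:E.
Proof.
move=> ab; rewrite (lebesgue_measure_itv `[a, b]%R) /= lte_fin.
case: ltgtP ab => //= -> _; by rewrite subrr.
Qed.

Lemma log2_ge0 (R : realType) (y : R) : 1 <= y -> 0 <= log2 y.
Proof.
move=> y1; rewrite /log2; apply: divr_ge0; first exact: ln_ge0.
by apply: ltW; apply: ln_gt0; rewrite ltr1n.
Qed.

Lemma delta_ge0 (R : realType) (d phi rho eta x1 x2 : R)
  (hd : 0 < d) (hphi : 0 < phi) (hrho : 0 < rho) (heta : 0 < eta)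
  (hnu0 : 0 <= ln 2 / phi - d ^+ 2) :
  Num.sqrt (ln 2 / phi - d ^+ 2) <= x2 - x1 ->
  0 <= Delta_sum rho eta phi d x1 x2.
Proof.
set nu := Num.sqrt _ => hz.
have nu0 : 0 <= nu by exact: sqrtr_ge0.
have nu2 : nu ^+ 2 = ln 2 / phi - d ^+ 2 by exact: sqr_sqrtr.
rewrite /Delta_sum /R_EDMA /R_TDMA /edma_rate.
set P := los_prob _ _ _ _.
set z := x2 - x1 in hz *.
have S0 : 0 <= rho * eta / d ^+ 2 by rewrite divr_ge0// ?mulr_ge0// ltW.
set S := rho * eta / d ^+ 2 in S0 *.
have w0 : 0 < z ^+ 2 + d ^+ 2 by rewrite ltr_pwDr ?exprn_gt0// sqr_ge0.
set A := log2 (1 + S / _).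
set B := log2 (1 + S).
have A0 : 0 <= A.
  apply: log2_ge0; rewrite lerDl; apply: divr_ge0 => //.
  apply: ltW; apply: ltr_pwDr => //; apply: divr_ge0 => //.
  by apply: mulr_ge0; apply: ltW.
  exact: ltW.
have B0 : 0 <= B by rewrite /B log2_ge0// lerDl.
have P0 : 0 <= P by rewrite /P /los_prob expR_ge0.
have P1 : 2 * P <= 1.
  have : P <= expR (- ln 2).
    rewrite /P /los_prob ler_expR lerN2.
    have -> : ln 2 = phi * (nu ^+ 2 + d ^+ 2) :> R.
      by rewrite nu2 subrK mulrC divfK// gt_eqF.
    rewrite ler_pM2l// lerD2r.
    by rewrite ler_pXn2r// ?nnegrE// (le_trans nu0).
  rewrite expRN lnK ?posrE// => hP.
  lra.
nra.
Qed.
Lemma int_mono d (T : measurableType d) (R : realType) (mu : {measure set T -> \bar R})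
  (f g : T -> \bar R) : (forall x, 0 <= f x)%E -> (forall x, f x <= g x)%E ->
  (\int[mu]_x f x <= \int[mu]_x g x)%E.
Proof.
move=> f0 fg.
have g0 : forall x, (0 <= g x)%E by move=> x; exact: le_trans (f0 x) (fg x).
rewrite !ge0_integralTE//.
apply: le_ereal_sup => _ [h hf <-]; exists h => //= x.
exact: le_trans (hf x) (fg x).
Qed.

Lemma int_sub d (T : measurableType d) (R : realType) (mu : {measure set T -> \bar R})
  (A B : set T) (f : T -> \bar R) : (forall x, 0 <= f x)%E -> A `<=` B ->
  (\int[mu]_(x in A) f x <= \int[mu]_(x in B) f x)%E.
Proof.
move=> f0 AB; rewrite [X in (X <= _)%E]integral_mkcond [X in (_ <= X)%E]integral_mkcond.
apply: int_mono => x; rewrite !patchE.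
  by case: ifP.
case: ifPn => xA; first by rewrite mem_set //; apply: AB; move: xA; rewrite inE.
by case: ifP.
Qed.

Lemma uniform_mono (R : realType) (a b : R) (ab : a < b) (A B : set R) :
  A `<=` B -> (uniform_prob ab A <= uniform_prob ab B)%E.
Proof.
move=> AB; apply: int_sub => // x; rewrite lee_fin; exact: uniform_pdf_ge0.
Qed.

Lemma uniform_itv (R : realType) (a b : R) (ab : a < b) (c : R) :
  a <= c <= b -> uniform_prob ab `[c, b] = ((b - c) / (b - a))%:E.
Proof.
move=> /andP[ac cb].
rewrite /uniform_prob integral_uniform_pdf.
have -> : `[c, b] `&` `[a, b] = `[c, b] :> set R.
  apply/seteqP; split => x /=; first by case.
  rewrite !in_itv/= => /andP[cx xb]; split; first by rewrite cx xb.
  by rewrite (le_trans ac cx) xb.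
rewrite (eq_integral (fun=> ((b - a)^-1)%:E)); last first.
  move=> x; rewrite inE/= in_itv/= => /andP[cx xb].
  by rewrite /uniform_pdf (le_trans ac cx) xb.
rewrite integral_cst// [X in (_ * X)%E](lebesgue_measure_itv `[c, b]%R) /= lte_fin.
case: ltgtP cb => //= cb _.
  by rewrite -EFinB -EFinM mulrC.
by rewrite cb subrr mul0r mule0.
Qed.

Theorem lemma3 (R : realType) (DL d phi rho eta : R)
  (hDL : 0 < DL) (hd : 0 < d) (hphi : 0 < phi) (hrho : 0 < rho) (heta : 0 < eta)
  (hnu0 : 0 <= ln 2 / phi - d ^+ 2)
  (hnu : Num.sqrt (ln 2 / phi - d ^+ 2) <= DL) :
  let nu := Num.sqrt (ln 2 / phi - d ^+ 2) in
  ((if nu <= DL / 2 then 1 - 2 * nu ^+ 2 / DL ^+ 2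
    else 2 * (1 - nu / DL) ^+ 2)%:E
   <= users_law hDL [set x | (0 <= Delta_sum rho eta phi d x.1 x.2)%R])%E.
Proof.
cbv zeta; set nu := Num.sqrt _.
have nu0 : 0 <= nu := sqrtr_ge0 _.
pose T := [set x : R * R | nu <= x.2 - x.1].
apply: (@le_trans _ _ (users_law hDL T)); last first.
  rewrite /users_law /product_measure1.
  apply: int_mono => [x|x]; first exact: measure_ge0.
  apply: uniform_mono => y /=; rewrite /xsection /= !inE /= => Ty.
  exact: delta_ge0.
pose h := DL / 2.
have h0 : 0 < h by rewrite divr_gt0.
pose g := fun x : R => Num.max 0 ((h - Num.max (x + nu) 0) / h).
apply: (@le_trans _ _ (\int[uniform_prob (left_lt hDL)]_x (g x)%:E)%E); last first.
  rewrite /users_law /product_measure1.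
  apply: int_mono => x; first by rewrite lee_fin /g le_max lexx.
  rewrite /g; set c := Num.max (x + nu) 0.
  have c0 : 0 <= c by rewrite /c le_max lexx orbT.
  have [ch|hc] := leP c h; last first.
    rewrite max_l; first exact: measure_ge0.
    by rewrite pmulr_lle0 ?invr_gt0// subr_le0 ltW.
  rewrite max_r; last by rewrite divr_ge0 ?subr_ge0// ltW.
  have := @uniform_itv R 0 (DL / 2) (right_lt hDL) c.
  rewrite c0 ch subr0 => /(_ isT) <-.
  apply: uniform_mono => y /=; rewrite in_itv/= => /andP[cy _].
  rewrite /xsection /= inE /T /= lerBrDr addrC.
  by rewrite (le_trans _ cy)// /c le_max lexx.

have mg : measurable_fun setT g.
  apply: measurable_realfun.measurable_maxr => //; apply: measurable_realfun.measurable_funM => //.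
  apply: measurable_realfun.measurable_funB => //; apply: measurable_realfun.measurable_maxr => //.
  exact: measurable_realfun.measurable_funD.
have g0 : forall x, 0 <= g x by move=> x; rewrite /g le_max lexx.
rewrite integral_uniform//; last first.
  exact/measurable_EFinP.
rewrite sub0r opprK -/h.
have [nuh|hnu'] := leP nu h; last first.
  have [nuDL|nuDL] := eqVneq nu DL.
    rewrite nuDL divff ?gt_eqF// subrr expr0n /= mulr0.
    apply: mule_ge0; first by rewrite lee_fin invr_ge0 ltW.
    by apply: integral_ge0 => x _; rewrite lee_fin.
  have nuDL' : nu < DL by rewrite lt_neqAle nuDL hnu.
  have DLh : DL = 2 * h by rewrite /h mulrC divfK ?pnatr_eq0.
  apply: (@le_trans _ _ ((h^-1)%:E * \int[lebesgue_measure]_(x in `[(- h)%R, (h - nu)%R]) (g x)%:E)%E); last first.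
    apply: lee_wpmul2l; first by rewrite lee_fin invr_ge0 ltW.
    apply: int_sub => [x|x]; first by rewrite lee_fin.
    rewrite /= !in_itv/= => /andP[-> xb]; apply: (le_trans xb).
    by rewrite subr_le0 ltW.
  have -> : (\int[@lebesgue_measure R]_(x in `[(- h)%R, (h - nu)%R]) (g x)%:E = \int[@lebesgue_measure R]_(x in `[(- h)%R, (h - nu)%R]) ((h - nu - x) / h)%:E)%E.
    apply: eq_integral.
    move=> x; rewrite inE /= in_itv/= => /andP[hx xb].
    rewrite /g; have -> : Num.max (x + nu) 0 = x + nu by rewrite max_l //; lra.
    rewrite max_r; last by apply: divr_ge0; lra.
    by congr ((_ / _)%:E); ring.
  rewrite ftc_lin'; last by lra.
  rewrite -EFinM lee_fin le_eqVlt; apply/orP; left; apply/eqP.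
  rewrite DLh; field.
  by rewrite gt_eqF.
have DLh : DL = 2 * h by rewrite /h mulrC divfK ?pnatr_eq0.
have -> : `[(- h)%R, 0%R] = `[(- h)%R, (- nu)%R] `|` `](- nu)%R, 0%R] :> set R.
  apply: itv_bndbnd_setU; rewrite bnd_simp; lra.
rewrite ge0_integral_setU//; last 3 first.
- by apply: measurable_funTS; apply/measurable_EFinP.
- by move=> x _; rewrite lee_fin.
- rewrite disj_set2E; apply/eqP/seteqP; split => x //=.
  rewrite !in_itv/= => -[/andP[_ a] /andP[b _]]; lra.
have -> : (\int[@lebesgue_measure R]_(x in `[(- h)%R, (- nu)%R]) (g x)%:E = (h - nu)%:E)%E.
  rewrite (eq_integral (fun=> 1%:E)); last first.
    move=> x; rewrite inE /= in_itv/= => /andP[hx xb].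
    rewrite /g; have -> : Num.max (x + nu) 0 = 0 by rewrite max_r //; lra.
    by rewrite subr0 divff ?gt_eqF// max_r.
  rewrite integral_cst// [X in (_ * X)%E]leb_itv; first by rewrite mul1e opprK addrC.
  lra.
rewrite integral_itv_obnd_cbnd; last by apply: measurable_funTS; apply/measurable_EFinP.
have -> : (\int[@lebesgue_measure R]_(x in `[(- nu)%R, 0%R]) (g x)%:E = \int[@lebesgue_measure R]_(x in `[(- nu)%R, 0%R]) ((h - nu - x) / h)%:E)%E.
  apply: eq_integral.
  move=> x; rewrite inE /= in_itv/= => /andP[hx xb].
  rewrite /g; have -> : Num.max (x + nu) 0 = x + nu by rewrite max_l //; lra.
  rewrite max_r; last by apply: divr_ge0; lra.
  by congr ((_ / _)%:E); ring.
rewrite ftc_lin'; last by lra.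
rewrite -EFinD -EFinM lee_fin le_eqVlt; apply/orP; left; apply/eqP.
rewrite DLh; field.
by rewrite gt_eqF.


Qed.
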